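(* For every $u\in L_{\mathrm{up}}$, the set $F_u$ is $2$-thin, i.e. every vertex $v\in V$ lies in $V_\ell$ for at most two links $\ell\in F_u$.
   Context: Let $(G=(V,E),L,w)$ be a WTAP instance (spanning tree $G$, links $L\subseteq\binom V2$, weights $w>0$) with a fixed root $r\in V$, and let $F\subseteq L$ be a WTAP solution, i.e. $\bigcup_{\ell\in F}P_\ell=E$, where $P_\ell$ is the edge set of the tree path between the endpoints of $\ell$ and $V_\ell$ its vertex set. Ancestors of $v$ are the vertices on the $r$-$v$ path in $G$ (including $r$ and $v$); descendants are defined reciprocally. $\mathrm{apex}(\ell)$ is the vertex of $V_\ell$ closest to $r$. An up-link is a link $\{t,b\}$ with $t$ an ancestor of $b$; $L_{\mathrm{up}}$ is the set of up-links. For $v\in V$ let $B_v=\{\ell\in F\colon\mathrm{apex}(\ell)\text{ is a descendant of }v\}$. For an up-link $u=\{t,b\}$ with $t$ an ancestor of $b$, let $v_u$ be the ancestor of $t$ farthest from $r$ such that $P_u\subseteq\bigcup_{\ell\in B_{v_u}}P_\ell$, and fix $F_u\subseteq B_{v_u}$ inclusion-wise minimal with $P_u\subseteq\bigcup_{\ell\in F_u}P_\ell$. *)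

(* Defs.v *)
From mathcomp Require Import all_boot.
Set Implicit Arguments. Unset Strict Implicit. Unset Printing Implicit Defensive.

Section WTAP.
Variable T : finType.
Variable e : rel T.

Definition tpath (x y : T) (p : seq T) : bool :=
  [&& path e x p, last x p == y & uniq (x :: p)].

Definition is_tree : Prop :=
  [/\ symmetric e, irreflexive e & forall x y, exists! p, tpath x y p].

Definition onVpath (x y z : T) : Prop :=
  exists p, tpath x y p /\ z \in x :: p.

Definition onEpath (x y a b : T) : Prop :=
  exists p, tpath x y p /\
    ((a, b) \in zip (x :: p) p \/ (b, a) \in zip (x :: p) p).

(* links are 2-element vertex sets; V_l and P_l *)
Definition link_V (l : {set T}) (z : T) : Prop :=
  exists x y, l = [set x; y] /\ onVpath x y z.
Definition link_E (l : {set T}) (a b : T) : Prop :=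
  exists x y, l = [set x; y] /\ onEpath x y a b.

Definition is_link_set (L : {set {set T}}) : Prop :=
  forall l, l \in L -> #|l| = 2.

Variable r : T.

Definition ancestor (a v : T) : Prop := onVpath r v a.

Definition depth_le (a b : T) : Prop :=
  forall p q, tpath r a p -> tpath r b q -> size p <= size q.

Definition is_apex (l : {set T}) (a : T) : Prop :=
  link_V l a /\ forall z, link_V l z -> depth_le a z.

Definition in_B (F : {set {set T}}) (v : T) (l : {set T}) : Prop :=
  l \in F /\ exists a, is_apex l a /\ ancestor v a.

Definition covered_by (Fs : {set T} -> Prop) (u : {set T}) : Prop :=
  forall a b, link_E u a b -> exists l, Fs l /\ link_E l a b.

Definition wtap_solution (L F : {set {set T}}) : Prop :=
  F \subset L /\ forall a b, e a b -> exists l, l \in F /\ link_E l a b.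

Definition is_vu (F : {set {set T}}) (t : T) (u : {set T}) (v : T) : Prop :=
  [/\ ancestor v t, covered_by (in_B F v) u &
      forall v', ancestor v' t -> covered_by (in_B F v') u -> depth_le v' v].

Definition is_Fu (F : {set {set T}}) (u : {set T}) (v : T)
  (Fu : {set {set T}}) : Prop :=
  [/\ forall l, l \in Fu -> in_B F v l,
      covered_by (fun l => l \in Fu) u &
      forall Fu' : {set {set T}}, Fu' \proper Fu -> ~ covered_by (fun l => l \in Fu') u].

Definition two_thin (Fu : {set {set T}}) : Prop :=
  forall z l1 l2 l3, l1 \in Fu -> l2 \in Fu -> l3 \in Fu ->
    l1 != l2 -> l1 != l3 -> l2 != l3 ->
    ~ [/\ link_V l1 z, link_V l2 z & link_V l3 z].

End WTAP.

(* Main.v *)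
Require Import Defs.
From mathcomp Require Import all_boot zify.
From Stdlib Require Import Classical.

Section Aux.
Variables (T : finType) (e : rel T).

Lemma mem_zipE (x0 x : T) (p : seq T) (a b : T) : (a,b) \in zip (x::p) p <->
  exists m, m < size p /\ nth x0 (x::p) m = a /\ nth x0 p m = b.
Proof.
elim: p x => [|y p IH] x /=; first by split=> // -[m []].
rewrite in_cons xpair_eqE; split.
- case/orP=> [/andP[/eqP-> /eqP->]|/IH [m [hm [h1 h2]]]]; first by exists 0.
  by exists m.+1.
- case=> -[|m] /= [hm [h1 h2]]; first by rewrite h1 h2 !eqxx.
  by apply/orP; right; apply/IH; exists m.
Qed.

Definition avoid (a b : T) : rel T := fun x y =>
  e x y && ~~ (((x == a) && (y == b)) || ((x == b) && (y == a))).

Hypothesis esy : symmetric e.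

Lemma avoid_sym (a b : T) : symmetric (avoid a b).
Proof.
move=> x y; rewrite /avoid esy; congr (_ && ~~ _).
by case: (x == a); case: (y == b); case: (x == b); case: (y == a).
Qed.

Lemma path_avoid (x : T) (p : seq T) (a b : T) : path e x p ->
  ~ ((a,b) \in zip (x::p) p \/ (b,a) \in zip (x::p) p) -> path (avoid a b) x p.
Proof.
elim: p x => [|y p IH] x //= /andP[exy pp] H.
apply/andP; split.
  rewrite /avoid exy /=; apply/negP => /orP [/andP[/eqP xa /eqP yb]|/andP[/eqP xb /eqP ya]];
  apply: H; subst; by [left; rewrite in_cons eqxx | right; rewrite in_cons eqxx].
apply: IH => // -[h|h]; apply: H; by [left; rewrite in_cons h orbT | right; rewrite in_cons h orbT].
Qed.

Lemma rev_tpath (x y : T) (p : seq T) : tpath e x y p -> exists q, tpath e y x q /\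
  forall a b, (a,b) \in zip (x::p) p -> (b,a) \in zip (y::q) q.
Proof.
case/and3P=> pp /eqP ly up.
have hr : y :: rev (belast x p) = rev (x :: p) by rewrite [x :: p]lastI rev_rcons ly.
exists (rev (belast x p)); split.
  apply/and3P; split.
  - rewrite -ly rev_path; apply: sub_path pp => u v; by rewrite esy.
  - have := congr1 (last y) hr; rewrite /= => ->.
    by rewrite rev_cons last_rcons.
  - by rewrite hr rev_uniq.
move=> a b /(mem_zipE x) [m [hm [h1 h2]]].
have sz : size (rev (belast x p)) = size p by rewrite size_rev size_belast.
apply/(mem_zipE x); exists (size p - m.+1); split; first by rewrite sz; lia.
have e1 : nth x (rev (belast x p)) (size p - m.+1) = nth x (y :: rev (belast x p)) (size p - m.+1).+1 by [].
rewrite e1 hr.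
rewrite !nth_rev /=; try lia.
have -> : (size p).+1 - (size p - m.+1).+1 = m.+1 by lia.
have -> : (size p).+1 - (size p - m.+1).+2 = m by lia.
by [].
Qed.


Lemma zip_mem (x : T) (p : seq T) (a b : T) : (a,b) \in zip (x::p) p ->
  a \in x :: p /\ b \in x :: p.
Proof.
move=> /(mem_zipE x) [m [hm [<- <-]]]; split.
  by apply: mem_nth => /=; apply: ltnW.
by rewrite in_cons; apply/orP; right; apply: mem_nth.
Qed.

Lemma onEpath_sym (x y a b : T) : onEpath e x y a b -> onEpath e y x a b.
Proof.
case=> p [tp H]; have [q [tq hq]] := rev_tpath _ _ _ tp.
exists q; split => //; case: H => H; [right|left]; exact: hq.
Qed.

Lemma set2_eq (x y x' y' : T) : [set x; y] = [set x'; y'] -> x' = x \/ x' = y.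
Proof. by move=> E; apply/set2P; rewrite E set21. Qed.

Lemma tree_uniq (x y : T) (p q : seq T) : is_tree e -> tpath e x y p -> tpath e x y q -> p = q.
Proof.
case=> _ _ /(_ x y) [p0 [_ H]] hp hq.
by rewrite -(H _ hp) -(H _ hq).
Qed.

Lemma comp_link (l : {set T}) (z a b fa fb : T) :
  link_V e l z -> link_E e l a b -> ~ link_E e l fa fb ->
  connect (avoid fa fb) z a /\ connect (avoid fa fb) z b.
Proof.
move=> [x [y [hl [p [tp zin]]]]] [x' [y' [hl' [p' [tp' hab]]]]] hn.
have cs := sym_connect_sym (avoid_sym fa fb).
have pa : path (avoid fa fb) x p.
  move/and3P: (tp) => [pp _ _]; apply: path_avoid => // H; apply: hn.
  by exists x, y; split => //; exists p.
have pa' : path (avoid fa fb) x' p'.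
  move/and3P: (tp') => [pp _ _]; apply: path_avoid => // H; apply: hn.
  by exists x', y'; split => //; exists p'.
have cxz := path_connect pa zin.
have cxy : connect (avoid fa fb) x y.
  by case/and3P: tp => _ /eqP <- _; exact: (path_connect pa (mem_last _ _)).
have cxy' : connect (avoid fa fb) x' y'.
  by case/and3P: tp' => _ /eqP <- _; exact: (path_connect pa' (mem_last _ _)).
have cxx' : connect (avoid fa fb) x x'.
  by case: (set2_eq _ _ _ _ (etrans (esym hl) hl')) => ->.
have [ha hb] : a \in x' :: p' /\ b \in x' :: p'.
  by case: hab => /zip_mem [h1 h2].
have czx' : connect (avoid fa fb) z x'.
  by apply: connect_trans cxx'; rewrite cs.
by split; apply: connect_trans czx' _; [exact: (path_connect pa' ha) | exact: (path_connect pa' hb)].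
Qed.


Lemma core (t b : T) (p : seq T) (j i k : nat) (fa fb : T) :
  is_tree e -> tpath e t b p -> j < size p ->
  ((fa == nth t (t::p) j) && (fb == nth t (t::p) j.+1)) ||
  ((fa == nth t (t::p) j.+1) && (fb == nth t (t::p) j)) ->
  i <= j -> j < k -> k <= size p ->
  connect (avoid fa fb) (nth t (t::p) i) (nth t (t::p) k) -> False.
Proof.
move=> tr tp hj hf hi hk1 hk2 hc.
move/and3P: (tp) => [pp /eqP lb up].
have ne : forall m, m <= size p -> m != j -> m != j.+1 ->
    (nth t (t::p) m != fa) && (nth t (t::p) m != fb).
  move=> m hm h1 h2; case/orP: hf => /andP[/eqP-> /eqP->];
  rewrite !nth_uniq //= ?ltnS // ?h1 ?h2 //; lia.
have avm : forall m, m < size p -> m != j -> avoid fa fb (nth t (t::p) m) (nth t (t::p) m.+1).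
  move=> m hm hmj; rewrite /avoid; apply/andP; split; first exact: (pathP t pp).
  case: (ltnP m j) => hmj2.
    have hm3 : m != j.+1 by lia.
    have /andP[h1 h2] := ne m (ltnW hm) hmj hm3.
    by rewrite (negbTE h1) (negbTE h2).
  have hm1 : m.+1 != j by lia.
  have hm2 : m.+1 != j.+1 by lia.
  have /andP[h1 h2] := ne m.+1 hm hm1 hm2.
  by rewrite (negbTE h1) (negbTE h2) !andbF.
have c1 : forall m, m <= j -> connect (avoid fa fb) t (nth t (t::p) m).
  elim => [|m IH] hm; first by rewrite connect0.
  apply: connect_trans (IH (ltnW hm)) (connect1 (avm m _ _)); lia.
have c2 : forall n m, m + n = size p -> j < m -> connect (avoid fa fb) (nth t (t::p) m) b.
  elim => [|n IH] m hmn hjm.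
    rewrite addn0 in hmn.
    have -> : m = (size (t :: p)).-1 by rewrite hmn.
    by rewrite nth_last /= lb connect0.
  apply: connect_trans (connect1 (avm m _ _)) (IH m.+1 _ _); lia.
have ctb : connect (avoid fa fb) t b.
  apply: connect_trans (c1 i hi) (connect_trans hc (c2 _ k (subnKC hk2) hk1)).
case/connectP: ctb => q pq.
case: (shortenP pq) => p' pp' up' _ hb.
have tp' : tpath e t b p'.
  apply/and3P; split => //; last by rewrite hb.
  by apply: sub_path pp' => x y /andP[].
have E := tree_uniq _ _ _ _ tr tp tp'.
rewrite -E in pp'.
move/pathP: pp' => /(_ t j hj).
by rewrite /avoid; case/orP: hf => /andP[/eqP-> /eqP->]; rewrite !eqxx /= ?orbT andbF.
Qed.


Lemma u_onE (t b a c : T) : link_E e [set t; b] a c -> t != b -> onEpath e t b a c.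
Proof.
move=> [x [y [hl H]]] tb.
have hx := set2_eq _ _ _ _ hl.
have hy : y = t \/ y = b by apply: (set2_eq _ _ _ _ (etrans hl (setUC _ _))).
have bad : forall w, [set t; b] = [set w; w] -> False.
  move=> w hw; move/negP: tb; apply; apply/eqP.
  have : t \in [set w; w] by rewrite -hw set21.
  have : b \in [set w; w] by rewrite -hw set22.
  by move=> /set2P [] -> /set2P [] ->.
case: hx => ?; case: hy => ?; subst.
- by case: (bad t).
- exact: H.
- exact: onEpath_sym.
- by case: (bad b).
Qed.

Lemma edge_pos (t b a c : T) (p : seq T) : is_tree e -> tpath e t b p ->
  link_E e [set t; b] a c -> t != b ->
  exists2 m, m < size p &
  ((a == nth t (t::p) m) && (c == nth t (t::p) m.+1)) ||
  ((a == nth t (t::p) m.+1) && (c == nth t (t::p) m)).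
Proof.
move=> tr tp hl tb; case: (u_onE _ _ _ _ hl tb) => q [tq H].
rewrite -(tree_uniq _ _ _ _ tr tp tq) in H.
case: H => /(mem_zipE t) [m [hm [h1 h2]]]; exists m => //; rewrite -h1 -h2;
  rewrite (_ : nth t p m = nth t (t::p) m.+1) // !eqxx ?orbT //.
Qed.

Lemma mid (t b : T) (p : seq T) (mi mj mk : nat) (ai ci aj cj ak ck z : T)
  (li lk : {set T}) :
  is_tree e -> tpath e t b p -> mi < mj -> mj < mk -> mk < size p ->
  ((ai == nth t (t::p) mi) && (ci == nth t (t::p) mi.+1)) ||
  ((ai == nth t (t::p) mi.+1) && (ci == nth t (t::p) mi)) ->
  ((aj == nth t (t::p) mj) && (cj == nth t (t::p) mj.+1)) ||
  ((aj == nth t (t::p) mj.+1) && (cj == nth t (t::p) mj)) ->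
  ((ak == nth t (t::p) mk) && (ck == nth t (t::p) mk.+1)) ||
  ((ak == nth t (t::p) mk.+1) && (ck == nth t (t::p) mk)) ->
  link_V e li z -> link_V e lk z -> link_E e li ai ci -> link_E e lk ak ck ->
  ~ link_E e li aj cj -> ~ link_E e lk aj cj -> False.
Proof.
move=> tr tp hij hjk hk hfi hfj hfk vi vk ei ek ni nk.
have cs := sym_connect_sym (avoid_sym aj cj).
have [c1 c2] := comp_link _ _ _ _ _ _ vi ei ni.
have [c3 c4] := comp_link _ _ _ _ _ _ vk ek nk.
have ci' : connect (avoid aj cj) z (nth t (t::p) mi).
  case/orP: hfi => /andP[/eqP ha /eqP hc]; [rewrite -ha; exact: c1 | rewrite -hc; exact: c2].
have ck' : connect (avoid aj cj) z (nth t (t::p) mk).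
  case/orP: hfk => /andP[/eqP ha /eqP hc]; [rewrite -ha; exact: c3 | rewrite -hc; exact: c4].
have hj : mj < size p := ltn_trans hjk hk.
apply: (core _ _ _ _ _ _ _ _ tr tp hj hfj (ltnW hij) hjk (ltnW hk)).
apply: connect_trans ck'; rewrite cs; exact: ci'.
Qed.


Lemma linkE_same (l : {set T}) (t : T) (p : seq T) (m : nat) (a c a' c' : T) :
  ((a == nth t (t::p) m) && (c == nth t (t::p) m.+1)) ||
  ((a == nth t (t::p) m.+1) && (c == nth t (t::p) m)) ->
  ((a' == nth t (t::p) m) && (c' == nth t (t::p) m.+1)) ||
  ((a' == nth t (t::p) m.+1) && (c' == nth t (t::p) m)) ->
  link_E e l a c -> link_E e l a' c'.
Proof.
move=> h h' [x [y [hl [q [tq H]]]]]; exists x, y; split => //; exists q; split => //.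
case/orP: h => /andP[/eqP ha /eqP hc]; case/orP: h' => /andP[/eqP ha' /eqP hc'];
  rewrite ha hc in H; rewrite ha' hc'; tauto.
Qed.

End Aux.

Theorem lemma11 (T : finType) (e : rel T) (r : T) (L F : {set {set T}})
  (t b v : T) (Fu : {set {set T}}) :
  is_tree e -> is_link_set L -> wtap_solution e L F ->
  [set t; b] \in L -> t != b -> ancestor e r t b ->
  is_vu e r F t [set t; b] v ->
  is_Fu e r F [set t; b] v Fu ->
  two_thin e Fu.
Proof.
move=> tr hL [FsubL covF] uL tb anc vu [hB covFu minFu] z l1 l2 l3 i1 i2 i3 d12 d13 d23 [v1 v2 v3].
have esy : symmetric e by case: tr.
have [p tp] : exists p, tpath e t b p.
  by case: tr => _ _ /(_ t b) [p [hp _]]; exists p.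
have priv : forall li, li \in Fu -> exists a c, [/\ link_E e [set t; b] a c, link_E e li a c &
    forall l, l \in Fu -> l != li -> ~ link_E e l a c].
  move=> li hi; apply: NNPP => hn; apply: (minFu _ (properD1 hi)) => a c hac.
  case: (covFu a c hac) => l [hl hlac].
  case: (eqVneq l li) => [el|nl]; last by exists l; split => //; rewrite in_setD1 nl hl.
  subst l; apply: NNPP => hn2; apply: hn; exists a, c; split => // l' hl' nl' hl'ac.
  by apply: hn2; exists l'; split => //; rewrite in_setD1 nl' hl'.
have [a1 [c1 [u1 e1 n1]]] := priv l1 i1.
have [a2 [c2 [u2 e2 n2]]] := priv l2 i2.
have [a3 [c3 [u3 e3 n3]]] := priv l3 i3.
have [m1 hm1 hf1] := @edge_pos _ _ esy _ _ _ _ _ tr tp u1 tb.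
have [m2 hm2 hf2] := @edge_pos _ _ esy _ _ _ _ _ tr tp u2 tb.
have [m3 hm3 hf3] := @edge_pos _ _ esy _ _ _ _ _ tr tp u3 tb.
have d21 : l2 != l1 by rewrite eq_sym.
have d31 : l3 != l1 by rewrite eq_sym.
have d32 : l3 != l2 by rewrite eq_sym.
have ne : forall (li lj : {set T}) ai ci aj cj mi, li \in Fu -> li != lj ->
    ((ai == nth t (t::p) mi) && (ci == nth t (t::p) mi.+1)) ||
    ((ai == nth t (t::p) mi.+1) && (ci == nth t (t::p) mi)) ->
    ((aj == nth t (t::p) mi) && (cj == nth t (t::p) mi.+1)) ||
    ((aj == nth t (t::p) mi.+1) && (cj == nth t (t::p) mi)) ->
    link_E e li ai ci -> (forall l, l \in Fu -> l != lj -> ~ link_E e l aj cj) -> False.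
  move=> li lj ai ci aj cj mi hi dij hfi hfj ei nj.
  exact: (nj li hi dij (@linkE_same _ _ _ _ _ _ _ _ _ _ hfi hfj ei)).
have ne12 : m1 != m2 by apply/eqP => E; subst; exact: (ne _ _ _ _ _ _ _ i1 d12 hf1 hf2 e1 n2).
have ne13 : m1 != m3 by apply/eqP => E; subst; exact: (ne _ _ _ _ _ _ _ i1 d13 hf1 hf3 e1 n3).
have ne23 : m2 != m3 by apply/eqP => E; subst; exact: (ne _ _ _ _ _ _ _ i2 d23 hf2 hf3 e2 n3).
have M := @mid _ _ esy t b p.
case: (ltngtP m1 m2) => [h12|h12|h12]; last by rewrite h12 eqxx in ne12.
all: case: (ltngtP m1 m3) => [h13|h13|h13]; last by rewrite h13 eqxx in ne13.
all: case: (ltngtP m2 m3) => [h23|h23|h23]; last by rewrite h23 eqxx in ne23.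
- exact: (M _ _ _ _ _ _ _ _ _ z _ _ tr tp h12 h23 hm3 hf1 hf2 hf3 v1 v3 e1 e3 (n2 _ i1 d12) (n2 _ i3 d32)).
- exact: (M _ _ _ _ _ _ _ _ _ z _ _ tr tp h13 h23 hm2 hf1 hf3 hf2 v1 v2 e1 e2 (n3 _ i1 d13) (n3 _ i2 d23)).
- by have := ltn_trans h13 (ltn_trans h12 h23); rewrite ltnn.
- exact: (M _ _ _ _ _ _ _ _ _ z _ _ tr tp h13 h12 hm2 hf3 hf1 hf2 v3 v2 e3 e2 (n1 _ i3 d31) (n1 _ i2 d21)).
- exact: (M _ _ _ _ _ _ _ _ _ z _ _ tr tp h12 h13 hm3 hf2 hf1 hf3 v2 v3 e2 e3 (n1 _ i2 d21) (n1 _ i3 d31)).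
- by have := ltn_trans h12 (ltn_trans h13 h23); rewrite ltnn.
- exact: (M _ _ _ _ _ _ _ _ _ z _ _ tr tp h23 h13 hm1 hf2 hf3 hf1 v2 v1 e2 e1 (n3 _ i2 d23) (n3 _ i1 d13)).
- exact: (M _ _ _ _ _ _ _ _ _ z _ _ tr tp h23 h12 hm1 hf3 hf2 hf1 v3 v1 e3 e1 (n2 _ i3 d32) (n2 _ i1 d12)).
Qed.
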